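(* Fix a real $\alpha>4$ and $\delta>0$. Let $B$ be the event that there exists $u\in x^{\perp}_{\circ}$ with $X_u\ge (1+\delta)\,s(\log s)^{\alpha}$. Then $\mathbb{P}(B)\to 0$ as $s\to\infty$, uniformly over all locally sparse generalized quadrangles $Q$ of order $(s,t)$ with $t\ge s(\log s)^{2\alpha}$ and all points $x$ of $Q$. In particular, asymptotically almost surely $|u^{\perp}\cap U|\le(1+\delta)s(\log s)^{\alpha}$ for all $u\in x^{\perp}\setminus S$.
   Context: A generalized quadrangle of order $(s,t)$ (with $s,t\ge 2$) is a point-line incidence structure in which every point lies on $t+1$ lines, every line contains $s+1$ points, two distinct points lie on at most one common line, and for every point $x$ and line $\ell$ with $x\notin\ell$ there is a unique point $x'\in\ell$ and a unique line $\ell'$ with $x,x'\in\ell'$. The quadrangle is locally sparse if for every set of three points, the number of points collinear with all three is at most $s+1$. Let $\mathcal{P}$ be the point set. For a point $u$, $u^{\perp}$ is the set of points collinear with $u$ (including $u$), $u^{\perp}_{\circ}=u^{\perp}\setminus\{u\}$, and for $R\subseteq\mathcal{P}$, $R^{\bowtie}=\bigcup_{y\in R}y^{\perp}$. Logarithms are natural. Random construction: fix $\alpha>4$ and a point $x$. Define $p$ by $ps=(s\log t-\alpha s\log\log s)/t$. Independently for each of the $t+1$ lines $\ell$ through $x$, with probability $ps$ the line is chosen, and on each chosen line one point of $\ell\setminus\{x\}$ is selected uniformly at random (independently). Let $S$ be the set of selected points and $U=\mathcal{P}\setminus(S\cup\{x\})^{\bowtie}$. For $u\in x^{\perp}_{\circ}$,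 let $U(u)$ be the set of points of $\mathcal{P}\setminus x^{\perp}$ not in $(S\setminus\{u\})^{\bowtie}$ and $X_u=|u^{\perp}\cap U(u)|$ (so $X_u=|u^\perp\cap U|$ when $u\notin S$). *)

(* Defs.v *)
From Stdlib Require Import Reals.
From mathcomp Require Import all_boot.
Set Implicit Arguments. Unset Strict Implicit. Unset Printing Implicit Defensive.

Section GQ.
Variables (P L : finType) (I : P -> L -> bool).

Definition collinear (x y : P) : bool := [exists l, I x l && I y l].

(* u^perp, including u *)
Definition perp (u : P) : {set P} := [set y | collinear u y].

Definition perp0 (u : P) : {set P} := perp u :\ u.

Definition bowtie (R : {set P}) : {set P} := [set z | [exists y in R, collinear y z]].

Definition is_GQ (s t : nat) : Prop :=
  [/\ ((2 <= s)%N /\ (2 <= t)%N),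
      (forall p : P, #|[set l | I p l]| = t.+1),
      (forall l : L, #|[set p | I p l]| = s.+1),
      (forall p q : P, p != q -> (#|[set l | I p l && I q l]| <= 1)%N) &
      (forall (p : P) (l : L), ~~ I p l ->
         #|[set pl : P * L | [&& I pl.1 l, I p pl.2 & I pl.1 pl.2]]| = 1%N)].

Definition locally_sparse (s : nat) : Prop :=
  forall a b c : P, a != b -> a != c -> b != c ->
    (#|perp a :&: perp b :&: perp c| <= s.+1)%N.

Local Open Scope R_scope.

Definition ps (s t : nat) (alpha : R) : R :=
  (INR s * ln (INR t) - alpha * INR s * ln (ln (INR s))) / INR t.

(* An outcome assigns to each line the selected point (if any).  Lines not
   through x select nothing; a line l through x is not chosen with prob. 1-ps
   and otherwise selects one of the s points of l \ {x} uniformly, each with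
   probability ps/s.  The weight below is the product probability mass;
   outcomes inconsistent with the construction get weight 0. *)
Definition outcome := {ffun L -> option P}.

Definition line_weight (s t : nat) (alpha : R) (x : P) (l : L) (o : option P) : R :=
  if I x l then
    match o with
    | None => 1 - ps s t alpha
    | Some y => if I y l && (y != x) then ps s t alpha / INR s else 0
    end
  else match o with None => 1 | Some _ => 0 end.

Definition weight (s t : nat) (alpha : R) (x : P) (w : outcome) : R :=
  \big[Rmult/1]_(l : L) line_weight s t alpha x l (w l).

Definition selected (x : P) (w : outcome) : {set P} :=
  [set y | [exists l, [&& I x l, I y l, y != x & w l == Some y]]].

Definition Uu (x : P) (w : outcome) (u : P) : {set P} :=
  [set z | (z \notin perp x) && (z \notin bowtie (selected x w :\ u))].

Definition Xu (x : P) (w : outcome) (u : P) : nat := #|perp u :&: Uu x w u|.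

Definition Rleb (a b : R) : bool := if Rle_dec a b then true else false.

Definition eventB (s : nat) (alpha delta : R) (x : P) (w : outcome) : bool :=
  [exists u in perp0 x,
     Rleb ((1 + delta) * INR s * Rpower (ln (INR s)) alpha) (INR (Xu x w u))].

Definition probB (s t : nat) (alpha delta : R) (x : P) : R :=
  \big[Rplus/0]_(w : outcome | eventB s alpha delta x w) weight s t alpha x w.

End GQ.

(* Main.v *)
From HB Require Import structures.
Require Import Defs.
From Stdlib Require Import Reals Lra ZArith.
From mathcomp Require Import all_boot.
From mathcomp Require Import zify.
Set Implicit Arguments. Unset Strict Implicit. Unset Printing Implicit Defensive.

Lemma cardT_sum (T : finType) (A : {set T}) : #|A| = \sum_(x : T) (x \in A : nat).
Proof. by rewrite -sum1_card big_mkcond; apply: eq_bigr => x _; case: (x \in A). Qed.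

Lemma card_le_sum (T U : finType) (A : {set T}) (C : {set U}) (B : U -> {set T}) :
  (forall z, z \in A -> exists2 y, y \in C & z \in B y) ->
  (#|A| <= \sum_(y in C) #|B y|)%N.
Proof.
move=> H; rewrite (eq_bigr (fun y => \sum_x (x \in B y : nat))); last by move=> y _; rewrite cardT_sum.
rewrite cardT_sum.
rewrite exchange_big /=; apply: leq_sum => z _.
case zA: (z \in A) => //; have [y yC zB] := H z zA.
by rewrite (bigD1 y) //= zB.
Qed.

Lemma sum_le_card (T U : finType) (A : {set T}) (C : {set U}) (B : U -> {set T}) :
  (forall y, y \in C -> B y \subset A) ->
  (forall y1 y2 z, y1 \in C -> y2 \in C -> z \in B y1 -> z \in B y2 -> y1 = y2) ->
  (\sum_(y in C) #|B y| <= #|A|)%N.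
Proof.
move=> HS HD; rewrite (eq_bigr (fun y => \sum_x (x \in B y : nat))); last by move=> y _; rewrite cardT_sum.
rewrite [#|A|]cardT_sum.
rewrite exchange_big /=; apply: leq_sum => z _.
case: (boolP [exists y in C, z \in B y]) => [/existsP[y /andP[yC zB]]|].
  rewrite (bigD1 y) //= zB big1 ?addn0.
    by rewrite (subsetP (HS y yC) z zB).
  move=> y' /andP[y'C ny]; case zB': (z \in B y') => //.
  by rewrite (HD y' y z y'C yC zB' zB) eqxx in ny.
move=> /existsPn H; rewrite big1 // => y yC.
by have := H y; rewrite yC /= => /negbTE ->.
Qed.

Lemma double_count (T U : finType) (A : {set T}) (B : {set U}) (r : T -> U -> bool) :
  \sum_(a in A) #|[set b in B | r a b]| = \sum_(b in B) #|[set a in A | r a b]|.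
Proof.
rewrite (eq_bigr (fun a => \sum_b (b \in [set b in B | r a b] : nat))); last by move=> a _; rewrite cardT_sum.
rewrite [RHS](eq_bigr (fun b => \sum_a (a \in [set a in A | r a b] : nat))); last by move=> b _; rewrite cardT_sum.
rewrite exchange_big /= [RHS]big_mkcond /=.
apply: eq_bigr => b _; case bB: (b \in B).
  rewrite big_mkcond; apply: eq_bigr => a _; rewrite !inE bB.
  by case: (a \in A); rewrite //= andbT.
by apply: big1 => a _; rewrite inE bB /=; case: (a \in A).
Qed.


Lemma bonf_pt (U : finType) (A : {set U}) (f : U -> bool) (b0 : bool) :
  (~~ b0 -> forall a, a \in A -> ~~ f a) ->
  (\sum_(a in A) (f a : nat) <= b0 + \sum_(a in A) \sum_(b in A :\ a) ((f a && f b) : nat))%N.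
Proof.
move=> Hb; set c := (\sum_(a in A) (f a : nat))%N.
have H1 : forall a, a \in A -> (\sum_(b in A :\ a) ((f a && f b) : nat) = f a * (c - f a))%N.
  move=> a aA.
  have -> : (c - f a = \sum_(b in A :\ a) (f b : nat))%N.
    rewrite /c (bigD1 a) //= addKn; apply: eq_bigl => b; by rewrite !inE andbC.
  rewrite big_distrr /=; apply: eq_bigr => b _.
  by case: (f a); case: (f b).
rewrite (eq_bigr _ H1).
have H2 : (\sum_(a in A) (f a * (c - f a)) + c = c * c)%N.
  rewrite {2}/c -big_split /= [in RHS]/c big_distrl /=; apply: eq_bigr => a aA.
  case fa: (f a); last by [].
  have : (1 <= c)%N by rewrite /c (bigD1 a) //= fa.
  by move=> h; rewrite !mul1n subnK.
have H3 : c = 0%N \/ b0 = true.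
  case: b0 Hb => [_|Hb]; [by right | left].
  by apply/eqP; rewrite sum_nat_eq0; apply/forallP => a0; apply/implyP => aA; have := Hb isT a0 aA; case: (f a0).
move: H2 H3; set D := (\sum_(a in A) _)%N => H2 [->|->] /=; nia.
Qed.

Lemma bonf (T U : finType) (A : {set U}) (K : {set T}) (Kf : U -> {set T}) :
  (forall a y, a \in A -> y \in Kf a -> y \in K) ->
  (\sum_(a in A) #|Kf a| <= #|K| + \sum_(a in A) \sum_(b in A :\ a) #|Kf a :&: Kf b|)%N.
Proof.
move=> HK.
rewrite (eq_bigr (fun a => \sum_y (y \in Kf a : nat))); last by move=> a _; rewrite cardT_sum.
rewrite [X in (_ <= _ + X)%N](eq_bigr (fun a => \sum_(b in A :\ a) \sum_y ((y \in Kf a) && (y \in Kf b) : nat))); last first.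
  by move=> a _; apply: eq_bigr => b _; rewrite cardT_sum; apply: eq_bigr => y _; rewrite inE.
rewrite [X in (_ <= _ + X)%N](eq_bigr (fun a => \sum_y \sum_(b in A :\ a) ((y \in Kf a) && (y \in Kf b) : nat))); last first.
  by move=> a _; rewrite exchange_big.
rewrite exchange_big /= [X in (_ <= _ + X)%N]exchange_big /= cardT_sum -big_split /=.
apply: leq_sum => y _; apply: (bonf_pt (f := fun a => y \in Kf a)).
by move=> nyK a aA; apply/negP => yK; move: nyK; rewrite (HK a y aA yK).
Qed.

Section GQL.
Variables (P L : finType) (I : P -> L -> bool) (s t : nat).
Hypothesis HG : is_GQ I s t.

Lemma lines_card p : #|[set l | I p l]| = t.+1.
Proof. by case: HG. Qed.
Lemma pts_card l : #|[set p | I p l]| = s.+1.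
Proof. by case: HG. Qed.
Lemma s_ge2 : (2 <= s)%N. Proof. by case: HG => [[]]. Qed.
Lemma t_ge2 : (2 <= t)%N. Proof. by case: HG => [[]]. Qed.

Lemma exists_line p : exists l, I p l.
Proof.
have : (0 < #|[set l | I p l]|)%N by rewrite lines_card.
by case/card_gt0P => l; rewrite inE; exists l.
Qed.

Lemma collinearC a b : collinear I a b = collinear I b a.
Proof. by apply/existsP/existsP => [[l /andP[h1 h2]]|[l /andP[h1 h2]]]; exists l; rewrite h1 h2. Qed.

Lemma collinear_refl p : collinear I p p.
Proof. by have [l h] := exists_line p; apply/existsP; exists l; rewrite h. Qed.

Lemma collinearI a b l : I a l -> I b l -> collinear I a b.
Proof. by move=> h1 h2; apply/existsP; exists l; rewrite h1 h2. Qed.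

Lemma in_perp u y : (y \in perp I u) = collinear I u y.
Proof. by rewrite inE. Qed.

Lemma in_perp0 u y : (y \in perp0 I u) = (y != u) && collinear I u y.
Proof. by rewrite !inE. Qed.

Lemma uniq_line p q l l' : p != q -> I p l -> I q l -> I p l' -> I q l' -> l = l'.
Proof.
move=> pq h1 h2 h3 h4; case: HG => _ _ _ Hu _.
have /card_le1_eqP H := Hu p q pq.
by apply: H; rewrite inE ?h1 ?h2 ?h3 ?h4.
Qed.

Lemma proj_uniq p l y1 y2 : ~~ I p l -> I y1 l -> collinear I p y1 ->
  I y2 l -> collinear I p y2 -> y1 = y2.
Proof.
move=> npl h1 /existsP[m1 /andP[pm1 y1m1]] h2 /existsP[m2 /andP[pm2 y2m2]].
case: HG => _ _ _ _ Hp; have := Hp p l npl => /eqP/cards1P[[a b] E].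
have : (y1, m1) \in [set (a, b)] by rewrite -E inE /= h1 pm1 y1m1.
have : (y2, m2) \in [set (a, b)] by rewrite -E inE /= h2 pm2 y2m2.
by rewrite !inE => /eqP[-> _] /eqP[-> _].
Qed.

Lemma proj_ex p l : ~~ I p l -> exists y, I y l && collinear I p y.
Proof.
move=> npl; case: HG => _ _ _ _ Hp; have := Hp p l npl => /eqP/cards1P[[a b] E].
have : (a, b) \in [set (a, b)] by rewrite inE.
rewrite -E inE /= => /and3P[h1 h2 h3]; exists a; rewrite h1 /=.
exact: (collinearI h2 h3).
Qed.

Lemma notperp_notI x a l : a \notin perp I x -> I x l -> ~~ I a l.
Proof. by move=> na xl; apply/negP => al; move: na; rewrite in_perp (collinearI xl al). Qed.

Lemma x_in_perp x : x \in perp I x.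
Proof. by rewrite in_perp collinear_refl. Qed.

Lemma proj_card x a : a \notin perp I x -> (t.+1 <= #|perp I a :&: perp0 I x|)%N.
Proof.
move=> na.
pose f l := odflt x [pick y | I y l && collinear I a y].
have fP l : I x l -> I (f l) l && collinear I a (f l).
  move=> xl; rewrite /f; case: pickP => [y //|H].
  by have [y /andP[h1 h2]] := proj_ex (notperp_notI na xl); have := H y; rewrite h1 h2.
have fx l : I x l -> f l != x.
  move=> xl; have /andP[_ h] := fP l xl; apply/eqP => E; rewrite E in h.
  by move: na; rewrite in_perp collinearC h.
rewrite -(lines_card x) -(card_in_imset (f := f)).
  apply: subset_leq_card; apply/subsetP => y /imsetP[l]; rewrite inE => xl ->.
  have /andP[h1 h2] := fP l xl.
  by rewrite inE in_perp h2 in_perp0 fx //= (collinearI xl h1).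
move=> l1 l2; rewrite !inE => h1 h2 E.
have /andP[a1 _] := fP l1 h1; have /andP[a2 _] := fP l2 h2.
apply: (uniq_line (p := f l1) (q := x)) => //; first exact: fx.
by rewrite E.
Qed.

Lemma pts_minus_card l p : I p l -> #|[set q | I q l] :\ p| = s.
Proof. by move=> pl; have := pts_card l; rewrite (cardsD1 p) inE pl => -[]. Qed.

Lemma Z_card x u : u \in perp0 I x -> (#|perp I u :\: perp I x| <= t * s)%N.
Proof.
rewrite in_perp0 => /andP[ux /existsP[l0 /andP[xl0 ul0]]].
pose C := [set m | I u m & ~~ I x m].
apply: leq_trans (card_le_sum (C := C) (B := fun m => [set q | I q m] :\ u) _) _.
  move=> z; rewrite !inE => /andP[nzx /existsP[m /andP[um zm]]].
  exists m; rewrite !inE ?um ?zm ?andbT //=.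
    by apply/negP => xm; move: nzx; rewrite (collinearI xm zm).
  by apply/eqP => E; move: nzx; rewrite E (collinearI xl0 ul0).
rewrite (eq_bigr (fun _ => s)); last by move=> m; rewrite inE => /andP[um _]; rewrite pts_minus_card.
rewrite sum_nat_const leq_mul2r; apply/orP; right.
have : (#|C| < #|[set m | I u m]|)%N.
  apply: proper_card; apply/properP; split.
    by apply/subsetP => m; rewrite !inE => /andP[].
  by exists l0; rewrite !inE ?ul0 ?xl0.
by rewrite lines_card.
Qed.

Lemma perp0_card x : (#|perp0 I x| <= t.+1 * s)%N.
Proof.
pose C := [set m | I x m].
apply: leq_trans (card_le_sum (C := C) (B := fun m => [set q | I q m] :\ x) _) _.
  move=> z; rewrite in_perp0 => /andP[zx /existsP[m /andP[xm zm]]].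
  by exists m; rewrite !inE ?xm ?zm ?zx.
rewrite (eq_bigr (fun _ => s)); last by move=> m; rewrite inE => xm; rewrite pts_minus_card.
by rewrite sum_nat_const lines_card.
Qed.

Lemma noncollinear_ex x : exists y, y \notin perp I x.
Proof.
have [l0 xl0] := exists_line x.
have : (1 < #|[set q | I q l0]|)%N by rewrite pts_card; have := s_ge2; lia.
case/card_gt1P => p1 [p2 [p1l p2l np]]; rewrite !inE in p1l p2l.
have [p [pl px]] : exists p, I p l0 /\ p != x.
  case: (eqVneq p1 x) => [E|]; last by exists p1.
  by exists p2; split => //; rewrite -E eq_sym.
have : (1 < #|[set m | I p m]|)%N by rewrite lines_card; have := t_ge2; lia.
case/card_gt1P => m1 [m2 [m1p m2p nm]]; rewrite !inE in m1p m2p.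
have [m [pm ml]] : exists m, I p m /\ m != l0.
  case: (eqVneq m1 l0) => [E|]; last by exists m1.
  by exists m2; split => //; rewrite -E eq_sym.
have : (1 < #|[set q | I q m]|)%N by rewrite pts_card; have := s_ge2; lia.
case/card_gt1P => q1 [q2 [q1m q2m nq]]; rewrite !inE in q1m q2m.
have [y [ym yp]] : exists y, I y m /\ y != p.
  case: (eqVneq q1 p) => [E|]; last by exists q1.
  by exists q2; split => //; rewrite -E eq_sym.
have nyl : ~~ I y l0.
  apply/negP => yl; move: ml; rewrite (uniq_line yp ym pm yl pl) eqxx //.
exists y; rewrite in_perp collinearC; apply/negP => cyx.
have := proj_uniq nyl xl0 cyx pl (collinearI ym pm).
by move=> E; move: px; rewrite E eqxx.
Qed.

Lemma compl_perp_card x : (#|~: perp I x| <= s * (t * s))%N.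
Proof.
have [l0 xl0] := exists_line x.
pose C := [set q | I q l0] :\ x.
apply: leq_trans (card_le_sum (C := C) (B := fun y => perp I y :\: perp I x) _) _.
  move=> z; rewrite inE => nz.
  have [y /andP[yl cz]] := proj_ex (notperp_notI nz xl0).
  exists y; last by rewrite !inE -in_perp nz /= collinearC.
  rewrite !inE yl andbT; apply/eqP => E; move: nz; rewrite -E in_perp collinearC cz.
  done.
apply: (@leq_trans (\sum_(y in C) t * s)).
  apply: leq_sum => y; rewrite !inE => /andP[yx yl]; apply: Z_card.
  by rewrite in_perp0 yx (collinearI xl0 yl).
by rewrite sum_nat_const /C pts_minus_card.
Qed.

Hypothesis HLS : locally_sparse I s.

Lemma t_bound (x : P) : (t <= 2 * s ^ 2)%N.
Proof.
have [y ny] := noncollinear_ex x.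
have xy : x != y by apply/eqP => E; move: ny; rewrite -E x_in_perp.
pose W := perp I y :&: perp0 I x.
pose Zc := ~: (perp I x :|: perp I y).
have h1 : (t.+1 <= #|W|)%N by apply: proj_card.
have h2 : forall w, w \in W -> ((t - 1) * s <= #|[set z in Zc | collinear I w z]|)%N.
  move=> w; rewrite !inE => /and3P[cyw wx cxw].
  have wy : w != y by apply/eqP => E; move: ny; rewrite in_perp -E cxw.
  pose M := [set m | [&& I w m, ~~ I x m & ~~ I y m]].
  have hM : (t - 1 <= #|M|)%N.
    have le1 : forall z, w != z -> (#|[set m | I w m && I z m]| <= 1)%N.
      move=> z wz; apply/card_le1_eqP => m1 m2; rewrite !inE => /andP[a1 b1] /andP[a2 b2].
      by rewrite (uniq_line wz a1 b1 a2 b2).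
    have := le1 x wx; have := le1 y wy.
    have : (#|[set m | I w m]| <= #|M| + #|[set m | I w m && I x m]| + #|[set m | I w m && I y m]|)%N.
      apply: leq_trans (subset_leq_card (B := M :|: [set m | I w m && I x m] :|: [set m | I w m && I y m]) _) _.
        apply/subsetP => m; rewrite !inE => wm; rewrite wm /=.
        by case: (I x m); case: (I y m).
      rewrite cardsU; apply: leq_trans (leq_subr _ _) _.
      by rewrite leq_add2r cardsU leq_subr.
    rewrite lines_card; lia.
  apply: leq_trans (_ : #|M| * s <= _)%N; first by rewrite leq_mul2r hM orbT.
  rewrite -sum_nat_const.
  rewrite (eq_bigr (fun m => #|[set q | I q m] :\ w|)); last first.
    by move=> m; rewrite inE => /andP[wm _]; rewrite pts_minus_card.
  apply: sum_le_card.
    move=> m; rewrite inE => /and3P[wm nxm nym]; apply/subsetP => z; rewrite !inE => /andP[zw zm].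
    rewrite (collinearI wm zm) andbT; apply/negP => /orP[cz|cz].
      by move: zw; rewrite (proj_uniq nxm wm cxw zm cz) eqxx.
    by move: zw; rewrite (proj_uniq nym wm cyw zm cz) eqxx.
  move=> m1 m2 z; rewrite !inE => /andP[w1 _] /andP[w2 _] /andP[zw z1] /andP[_ z2].
  exact: (uniq_line zw z1 w1 z2 w2).
have h3 : forall z, z \in Zc -> (#|[set w in W | collinear I w z]| <= s.+1)%N.
  move=> z; rewrite !inE negb_or => /andP[nxz nyz].
  have xz : x != z by apply/eqP => E; move: nxz; rewrite E collinear_refl.
  have yz : y != z by apply/eqP => E; move: nyz; rewrite E collinear_refl.
  apply: leq_trans (HLS xy xz yz); apply: subset_leq_card; apply/subsetP => w.
  by rewrite !inE => /andP[/and3P[-> _ ->] cwz]; rewrite collinearC cwz.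
have h4 : (#|Zc| <= s * (t * s))%N.
  apply: leq_trans (compl_perp_card x); apply: subset_leq_card.
  by apply/subsetP => z; rewrite !inE negb_or => /andP[].
have key : (t.+1 * ((t - 1) * s) <= s * (t * s) * s.+1)%N.
  apply: (@leq_trans (\sum_(w in W) #|[set z in Zc | collinear I w z]|)).
    apply: leq_trans (_ : \sum_(w in W) ((t - 1) * s) <= _)%N.
      by rewrite sum_nat_const leq_mul2r h1 orbT.
    by apply: leq_sum => w; apply: h2.
  rewrite double_count.
  apply: leq_trans (_ : \sum_(z in Zc) s.+1 <= _)%N; first by apply: leq_sum => z; apply: h3.
  by rewrite sum_nat_const leq_mul2r h4.
have := s_ge2; have := t_ge2; nia.
Qed.

End GQL.


Local Open Scope R_scope.
Lemma Rplus_assoc' : associative Rplus.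
Proof. by move=> a b c; rewrite Rplus_assoc. Qed.
Lemma Rmult_assoc' : associative Rmult.
Proof. by move=> a b c; rewrite Rmult_assoc. Qed.
HB.instance Definition _ := Monoid.isComLaw.Build R 0 Rplus Rplus_assoc' Rplus_comm Rplus_0_l.
HB.instance Definition _ := Monoid.isComLaw.Build R 1 Rmult Rmult_assoc' Rmult_comm Rmult_1_l.
HB.instance Definition _ := Monoid.isMulLaw.Build R 0 Rmult Rmult_0_l Rmult_0_r.
HB.instance Definition _ := Monoid.isAddLaw.Build R Rmult Rplus Rmult_plus_distr_r Rmult_plus_distr_l.

Lemma leR_sum (T : finType) (Pr : pred T) (F G : T -> R) :
  (forall i, Pr i -> F i <= G i) ->
  \big[Rplus/0]_(i | Pr i) F i <= \big[Rplus/0]_(i | Pr i) G i.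
Proof. move=> H; apply: (big_ind2 (fun a b => a <= b)) => //; [lra | move=> *; lra]. Qed.

Lemma sumR_ge0 (T : finType) (Pr : pred T) (F : T -> R) :
  (forall i, Pr i -> 0 <= F i) -> 0 <= \big[Rplus/0]_(i | Pr i) F i.
Proof. move=> H; apply: (big_ind (fun a => 0 <= a)) => //; [lra | move=> *; lra]. Qed.

Lemma prodR_ge0 (T : finType) (Pr : pred T) (F : T -> R) :
  (forall i, Pr i -> 0 <= F i) -> 0 <= \big[Rmult/1]_(i | Pr i) F i.
Proof. move=> H; apply: (big_ind (fun a => 0 <= a)) => //; [lra | move=> *; nra]. Qed.

Lemma prodR_le (T : finType) (Pr : pred T) (F G : T -> R) :
  (forall i, Pr i -> 0 <= F i <= G i) ->
  \big[Rmult/1]_(i | Pr i) F i <= \big[Rmult/1]_(i | Pr i) G i.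
Proof.
move=> H; suff : 0 <= \big[Rmult/1]_(i | Pr i) F i <= \big[Rmult/1]_(i | Pr i) G i by case.
apply: (big_ind2 (fun a b => 0 <= a <= b)) => //; first lra.
by move=> a b c d [? ?] [? ?]; split; nra.
Qed.

Lemma INR_sum (T : finType) (Pr : pred T) (F : T -> nat) :
  INR (\sum_(i | Pr i) F i) = \big[Rplus/0]_(i | Pr i) INR (F i).
Proof. by apply: (big_morph INR plus_INR). Qed.

Lemma exp_sum (T : finType) (Pr : pred T) (F : T -> R) :
  exp (\big[Rplus/0]_(i | Pr i) F i) = \big[Rmult/1]_(i | Pr i) exp (F i).
Proof. by apply: (big_morph exp exp_plus exp_0). Qed.

Lemma sumR_const (T : finType) (A : {set T}) (c : R) :
  \big[Rplus/0]_(i in A) c = INR #|A| * c.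
Proof.
rewrite -sum1_card INR_sum big_distrl /=; apply: eq_bigr => i _; lra.
Qed.

Lemma sumR_option (T : finType) (x0 : T) (F : option T -> R) :
  \big[Rplus/0]_(o : option T) F o = F None + \big[Rplus/0]_(p : T) F (Some p).
Proof.
rewrite (bigD1 None) //=; congr (_ + _).
rewrite (reindex (@Some T)) /=; last by exists (odflt x0) => [y _|[y|]] //.
by apply: eq_bigl.
Qed.

Lemma sumR_scale (T : finType) (Pr : pred T) (F : T -> R) c :
  \big[Rplus/0]_(i | Pr i) (c * F i) = c * \big[Rplus/0]_(i | Pr i) F i.
Proof. by rewrite big_distrr. Qed.

Lemma exp_le' a b : a <= b -> exp a <= exp b.
Proof. move=> h; case: (Rle_lt_or_eq_dec _ _ h) => [h'|->]; [left; exact: exp_increasing | lra]. Qed.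

Lemma ln_le' a b : 0 < a -> a <= b -> ln a <= ln b.
Proof. move=> h0 h; case: (Rle_lt_or_eq_dec _ _ h) => [h'|->]; [left; exact: ln_increasing | lra]. Qed.

Lemma INR_muln m n : INR (m * n)%N = INR m * INR n.
Proof. exact: mult_INR. Qed.
Lemma INR_addn m n : INR (m + n)%N = INR m + INR n.
Proof. exact: plus_INR. Qed.
Lemma INR_subn m n : (n <= m)%N -> INR (m - n)%N = INR m - INR n.
Proof. move=> h; apply: minus_INR; exact/leP. Qed.
Lemma INR_expn m n : INR (m ^ n)%N = INR m ^ n.
Proof. rewrite -pow_INR; congr INR; elim: n => // n IH; by rewrite expnS IH. Qed.
Lemma INR_leq m n : (m <= n)%N -> INR m <= INR n.
Proof. by move/leP; apply: le_INR. Qed.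

Lemma ffact_ge n k : INR k <= INR n -> (INR n - INR k) ^ k <= INR (n ^_ k).
Proof.
elim: k n => [|k IH] n h; first by rewrite /= ; lra.
case: n h => [|n] h; first by rewrite S_INR /= in h; have := pos_INR k; lra.
rewrite ffactSS INR_muln !S_INR -tech_pow_Rmult.
have h' : INR k <= INR n by rewrite !S_INR in h; lra.
have := IH n h' => h2.
have h3 : 0 <= (INR n - INR k) ^ k by apply: pow_le; lra.
have -> : INR n + 1 - (INR k + 1) = INR n - INR k by ring.
have := pos_INR k; have := pos_INR n => ? ?; apply: Rmult_le_compat; lra.
Qed.

Lemma ffact_le_exp n k : (n ^_ k <= n ^ k)%N.
Proof.
elim: k n => [|k IH] n //; case: n => [|n] //.
rewrite ffactSS expnS leq_mul2l /=; apply: leq_trans (IH n) _.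
by rewrite leq_exp2l // ?ltnS || (case: k {IH} => // k; rewrite leq_exp2r).
Qed.

Local Open Scope R_scope.

Section Prob.
Variables (P L : finType) (I : P -> L -> bool) (s t : nat) (alpha : R) (x : P).
Hypothesis HG : is_GQ I s t.
Hypothesis Hps : 0 <= ps s t alpha <= 1.

Local Notation pp := (ps s t alpha).
Local Notation q := (ps s t alpha / INR s).

Lemma s_pos : 0 < INR s.
Proof. have := s_ge2 HG => h; apply: lt_0_INR; apply/ltP; lia. Qed.

Lemma q_ge0 : 0 <= q.
Proof. rewrite /Rdiv; apply: Rmult_le_pos; [lra | apply/Rlt_le/Rinv_0_lt_compat/s_pos]. Qed.

Lemma qs : q * INR s = pp.
Proof. by  field; have := s_pos; lra. Qed.

Lemma lw_ge0 l o : 0 <= line_weight I s t alpha x l o.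
Proof.
rewrite /line_weight; case: (I x l); case: o => [y|]; try lra.
by case: ifP => _; [have := q_ge0; lra | lra].
Qed.

Lemma weight_ge0 w : 0 <= weight I s t alpha x w.
Proof. by apply: prodR_ge0 => l _; apply: lw_ge0. Qed.

Lemma factor (F : L -> option P -> R) :
  \big[Rplus/0]_(w : outcome P L) \big[Rmult/1]_(l : L) F l (w l) =
  \big[Rmult/1]_(l : L) \big[Rplus/0]_(o : option P) F l o.
Proof. by rewrite bigA_distr_bigA. Qed.


Variables (u : P) (A : {set P}).
Hypothesis Hu : u \in perp0 I x.
Hypothesis HA : A \subset perp I u :\: perp I x.

Definition kill l y := [&& I x l, I y l, y != x, y != u & [exists a in A, collinear I y a]].
Definition gk l (o : option P) : R :=
  match o with Some y => if kill l y then 0 else 1 | None => 1 end.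

Lemma step1 w : weight I s t alpha x w * (if A \subset Uu I x w u then 1 else 0) <=
  \big[Rmult/1]_l (line_weight I s t alpha x l (w l) * gk l (w l)).
Proof.
case: ifP => HAU; last first.
  rewrite Rmult_0_r; apply: prodR_ge0 => l _; apply: Rmult_le_pos; first exact: lw_ge0.
  by rewrite /gk; case: (w l) => [y|]; [case: ifP|]; lra.
rewrite Rmult_1_r big_split /= [X in _ <= _ * X]big1; first by rewrite Rmult_1_r; apply: Rle_refl.
move=> l _; rewrite /gk; case E: (w l) => [y|] //; case: ifP => // /and5P[xl yl yx yu /existsP[a /andP[aA cya]]].
have : a \in Uu I x w u by apply: (subsetP HAU).
rewrite inE => /andP[_ /negP[]]; rewrite inE; apply/existsP; exists y; rewrite cya andbT.
rewrite !inE yu /=; apply/existsP; exists l; rewrite xl yl yx /= E eqxx //.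
Qed.

Lemma kill_sub l : [set y | kill l y] \subset [set p | I p l] :\ x.
Proof. by apply/subsetP => y; rewrite !inE => /and5P[_ -> -> _ _]. Qed.

Lemma nkill_le l : (#|[set y | kill l y]| <= s)%N.
Proof.
case xl: (I x l); first by rewrite -(pts_minus_card HG xl); apply: subset_leq_card; apply: kill_sub.
rewrite (_ : [set y | kill l y] = set0) ?cards0 //; apply/setP => y; rewrite !inE /kill xl //.
Qed.

Lemma step3 l : \big[Rplus/0]_(o : option P) (line_weight I s t alpha x l o * gk l o)
   = 1 - q * INR #|[set y | kill l y]|.
Proof.
rewrite (sumR_option x) /line_weight /=.
case xl: (I x l); last first.
  rewrite big1; last by move=> p _; rewrite Rmult_0_l.
  rewrite (_ : [set y | kill l y] = set0) ?cards0 /=; last by apply/setP => y; rewrite !inE /kill xl.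
  lra.
rewrite (eq_bigr (fun p => q * INR ([&& I p l, p != x & ~~ kill l p] : nat))); last first.
  move=> p _; case: (I p l); case: (p != x); case: (kill l p) => /=; lra.
rewrite sumR_scale -INR_sum.
have -> : (\sum_p ([&& I p l, p != x & ~~ kill l p] : nat) = s - #|[set y | kill l y]|)%N.
  have -> : (\sum_p ([&& I p l, p != x & ~~ kill l p] : nat) = #|([set p | I p l] :\ x) :\: [set y | kill l y]|)%N.
    rewrite -sum1_card [RHS]big_mkcond /=; apply: eq_bigr => p _; rewrite !inE.
    by case: (I p l); case: (p != x); case: (kill l p).
  rewrite -(pts_minus_card HG xl) -(cardsID [set y | kill l y] ([set p | I p l] :\ x)).
  by rewrite (setIidPr (kill_sub l)) addKn.
rewrite minus_INR; last by apply/leP; apply: nkill_le.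
have := qs => h; nra.
Qed.

Definition Kset := [set y | [&& y \in perp0 I x, y != u & [exists a in A, collinear I y a]]].

Lemma step5 : (#|Kset| <= \sum_(l : L) #|[set y | kill l y]|)%N.
Proof.
rewrite (eq_bigl (fun l => l \in [set: L])); last by move=> l; rewrite inE.
apply: card_le_sum => y; rewrite inE => /and3P[]; rewrite in_perp0 => /andP[yx /existsP[l /andP[xl yl]]] yu ex.
by exists l; rewrite ?inE // /kill xl yl yx yu ex.
Qed.

Lemma prob_A :
  \big[Rplus/0]_(w : outcome P L) (weight I s t alpha x w * (if A \subset Uu I x w u then 1 else 0))
  <= exp (- (q * INR #|Kset|)).
Proof.
apply: Rle_trans (leR_sum (fun w _ => step1 w)) _.
rewrite (factor (fun l o => line_weight I s t alpha x l o * gk l o)).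
rewrite (eq_bigr (fun l => 1 - q * INR #|[set y | kill l y]|)); last by move=> l _; apply: step3.
apply: Rle_trans (_ : _ <= \big[Rmult/1]_l exp (- (q * INR #|[set y | kill l y]|))) _.
  apply: prodR_le => l _; split.
    have := nkill_le l => /leP/le_INR h; have := qs; have := q_ge0 => h1 h2.
    have := Rmult_le_compat_l _ _ _ h1 h; lra.
  by have := exp_ineq1_le (- (q * INR #|[set y | kill l y]|)); lra.
rewrite -exp_sum; apply: exp_le'.
rewrite (eq_bigr (fun l => (- q) * INR #|[set y | kill l y]|)); last by move=> l _; lra.
rewrite sumR_scale -INR_sum.
have := step5 => /leP/le_INR h; have := q_ge0 => h1.
have := Rmult_le_compat_l _ _ _ h1 h; lra.
Qed.


Hypothesis HLS : locally_sparse I s.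

Lemma Kset_bound : (#|A| * t <= #|Kset| + #|A| * (#|A| - 1) * s.+1)%N.
Proof.
pose Kf a := (perp I a :&: perp0 I x) :\ u.
have hA : forall a, a \in A -> (a \in perp I u) && (a \notin perp I x).
  by move=> a aA; have := subsetP HA a aA; rewrite !inE andbC.
have h1 : forall a, a \in A -> (t <= #|Kf a|)%N.
  move=> a aA; have /andP[au ax] := hA a aA.
  have := proj_card HG ax; rewrite (cardsD1 u) !inE.
  have au' : collinear I a u by rewrite collinearC -in_perp.
  move: Hu; rewrite in_perp0 => /andP[-> ->]; rewrite au' /=.
  by rewrite add1n ltnS.
have h2 : forall a y, a \in A -> y \in Kf a -> y \in Kset.
  move=> a y aA; rewrite !inE => /and4P[yu cay yx cxy].
  rewrite yx cxy yu /=; apply/existsP; exists a; by rewrite aA collinearC.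
have h3 : forall a b, a \in A -> b \in A :\ a -> (#|Kf a :&: Kf b| <= s.+1)%N.
  move=> a b aA; rewrite !inE => /andP[ba bA].
  have /andP[_ ax] := hA a aA; have /andP[_ bx] := hA b bA.
  have xa : x != a by apply/eqP => E; move: ax; rewrite -E (x_in_perp HG).
  have xb : x != b by apply/eqP => E; move: bx; rewrite -E (x_in_perp HG).
  have ab : a != b by rewrite eq_sym.
  apply: leq_trans (HLS xa xb ab).
  apply: subset_leq_card; apply/subsetP => y; rewrite !inE.
  by move=> /andP[/and4P[_ -> _ ->] /and4P[_ -> _ _]].
have := bonf h2 => hb.
have h4 : (\sum_(a in A) \sum_(b in A :\ a) #|Kf a :&: Kf b| <= #|A| * (#|A| - 1) * s.+1)%N.
  apply: leq_trans (_ : \sum_(a in A) ((#|A| - 1) * s.+1) <= _)%N; last by rewrite sum_nat_const mulnA.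
  apply: leq_sum => a aA.
  apply: leq_trans (_ : \sum_(b in A :\ a) s.+1 <= _)%N; first by apply: leq_sum => b; apply: h3.
  by rewrite sum_nat_const (cardsD1 a A) aA /= add1n subn1.
have h5 : (\sum_(a in A) t <= \sum_(a in A) #|Kf a|)%N by apply: leq_sum => a; apply: h1.
rewrite sum_nat_const in h5.
apply: leq_trans h5 _; apply: leq_trans hb _; by rewrite leq_add2l.
Qed.

End Prob.

Section Prob2.
Variables (P L : finType) (I : P -> L -> bool) (s t : nat) (alpha : R) (x : P).
Hypothesis HG : is_GQ I s t.
Hypothesis Hps : 0 <= ps s t alpha <= 1.
Hypothesis HLS : locally_sparse I s.
Local Notation q := (ps s t alpha / INR s).
Local Notation W := (weight I s t alpha x).

Definition Zu u := perp I u :\: perp I x.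
Definition Dk u k := [set A : {set P} | A \subset Zu u & #|A| == k].

Lemma binom_X w u k : 'C(Xu I x w u, k) = (\sum_(A in Dk u k) ((A \subset Uu I x w u) : nat))%N.
Proof.
rewrite /Xu -cards_draws cardT_sum [RHS]big_mkcond /=; apply: eq_bigr => A _.
rewrite !inE.
have -> : (A \subset perp I u :&: Uu I x w u) = (A \subset Zu u) && (A \subset Uu I x w u).
  apply/idP/andP => [h|[h1 h2]].
    split; apply/subsetP => y yA; have := subsetP h y yA; rewrite !inE.
      by case/andP => -> /andP[-> _].
    by case/andP => _ ->.
  apply/subsetP => y yA; have := subsetP h1 y yA; have := subsetP h2 y yA.
  by rewrite !inE => -> /andP[_ ->].
by case: (A \subset Zu u); case: (#|A| == k); case: (A \subset Uu I x w u).
Qed.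

Lemma INR_bool (b : bool) : INR (b : nat) = if b then 1 else 0.
Proof. by case: b. Qed.

Lemma expect_bound u k : u \in perp0 I x ->
  \big[Rplus/0]_(w : outcome P L) (W w * INR 'C(Xu I x w u, k)) <=
  INR 'C(t * s, k) * exp (- (q * (INR (k * t) - INR (k * (k - 1) * s.+1)))).
Proof.
move=> Hu.
under eq_bigr => w _ do rewrite binom_X INR_sum -sumR_scale.
rewrite exchange_big /=.
apply: Rle_trans (_ : _ <= \big[Rplus/0]_(A in Dk u k) exp (- (q * (INR (k * t) - INR (k * (k - 1) * s.+1))))) _.
  apply: leR_sum => A; rewrite inE => /andP[HA /eqP HAk].
  under eq_bigr => w _ do rewrite INR_bool.
  apply: Rle_trans (prob_A x HG Hps u A) _.
  apply: exp_le'; apply: Ropp_le_contravar; apply: Rmult_le_compat_l; first exact: q_ge0 HG Hps.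
  have := Kset_bound HG Hu HA HLS; rewrite HAk => /INR_leq; rewrite INR_addn; lra.
rewrite sumR_const; apply: Rmult_le_compat_r; first by left; apply: exp_pos.
apply: INR_leq; rewrite cards_draws; apply: leq_bin2l.
exact: (Z_card HG Hu).
Qed.


Lemma sumR_sub (T : finType) (Pr : pred T) (F : T -> R) :
  (forall i, 0 <= F i) -> \big[Rplus/0]_(i | Pr i) F i <= \big[Rplus/0]_i F i.
Proof.
move=> H; rewrite big_mkcond /=; apply: leR_sum => i _; case: (Pr i); [exact: Rle_refl | exact: H].
Qed.

Lemma RlebP a b : Rleb a b -> a <= b.
Proof. by rewrite /Rleb; case: Rle_dec. Qed.

Lemma markov u k T : INR k <= T ->
  (T - INR k) ^ k * \big[Rplus/0]_(w | Rleb T (INR (Xu I x w u))) W w <=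
  INR (k`!) * \big[Rplus/0]_(w : outcome P L) (W w * INR 'C(Xu I x w u, k)).
Proof.
move=> hT; rewrite [X in X <= _]big_distrr [X in _ <= X]big_distrr /=.
apply: Rle_trans (_ : _ <= \big[Rplus/0]_(w | Rleb T (INR (Xu I x w u))) (INR k`! * (W w * INR 'C(Xu I x w u, k)))) _.
  apply: leR_sum => w /RlebP hX.
  rewrite -Rmult_assoc (Rmult_comm (INR _)) Rmult_assoc -INR_muln mulnC bin_ffact.
  rewrite (Rmult_comm (_ ^ k)); apply: Rmult_le_compat_l; first exact: weight_ge0 HG Hps w.
  apply: Rle_trans (ffact_ge _); first by apply: pow_incr; lra.
  lra.
apply: sumR_sub => w; apply: Rmult_le_pos; first exact: pos_INR.
apply: Rmult_le_pos; [exact: weight_ge0 HG Hps w | exact: pos_INR].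
Qed.

Lemma union_bound delta :
  probB I s t alpha delta x <=
  \big[Rplus/0]_(u in perp0 I x)
     \big[Rplus/0]_(w | Rleb ((1 + delta) * INR s * Rpower (ln (INR s)) alpha) (INR (Xu I x w u))) W w.
Proof.
set T := (1 + delta) * INR s * Rpower (ln (INR s)) alpha.
rewrite /probB big_mkcond /=.
under [X in _ <= X]eq_bigr => u _ do rewrite big_mkcond /=.
rewrite exchange_big /=; apply: leR_sum => w _.
case: ifP => [/existsP[u /andP[uP hu]]|_]; last first.
  by apply: sumR_ge0 => u _; case: ifP => _; [exact: weight_ge0 HG Hps w | lra].
rewrite (bigD1 u) //= hu; have : 0 <= \big[Rplus/0]_(i | (i \in perp0 I x) && (i != u))
   (if Rleb T (INR (Xu I x w i)) then W w else 0).
  by apply: sumR_ge0 => i _; case: ifP => _; [exact: weight_ge0 HG Hps w | lra].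
lra.
Qed.


Lemma probB_bound delta k :
  let T := (1 + delta) * INR s * Rpower (ln (INR s)) alpha in
  INR k < T ->
  probB I s t alpha delta x <=
  INR (t.+1 * s) * (INR (t * s) ^ k * exp (- (q * (INR (k * t) - INR (k * (k - 1) * s.+1)))))
  / (T - INR k) ^ k.
Proof.
move=> T hk.
set M := exp _.
have hpos : 0 < (T - INR k) ^ k by apply: pow_lt; lra.
have hM : 0 <= M by left; apply: exp_pos.
have hu : forall u, u \in perp0 I x ->
    \big[Rplus/0]_(w | Rleb T (INR (Xu I x w u))) W w <= INR (t * s) ^ k * M / (T - INR k) ^ k.
  move=> u Hu; apply: (Rmult_le_reg_l ((T - INR k) ^ k)) => //.
  rewrite /Rdiv (Rmult_comm (INR (t * s) ^ k * M)) -Rmult_assoc Rinv_r ?Rmult_1_l; last lra.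
  apply: Rle_trans (markov u (Rlt_le _ _ hk)) _.
  apply: Rle_trans (Rmult_le_compat_l _ _ _ (pos_INR _) (expect_bound k Hu)) _.
  rewrite -Rmult_assoc -INR_muln mulnC bin_ffact -INR_expn.
  apply: Rmult_le_compat_r => //; apply: INR_leq; apply: ffact_le_exp.
apply: Rle_trans (union_bound delta) _.
apply: Rle_trans (leR_sum hu) _.
rewrite sumR_const /Rdiv [X in _ <= X]Rmult_assoc; apply: Rmult_le_compat_r.
  apply: Rmult_le_pos; first by apply: Rmult_le_pos => //; apply: pow_le; apply: pos_INR.
  by left; apply: Rinv_0_lt_compat.
by apply: INR_leq; apply: perp0_card.
Qed.

End Prob2.

Local Open Scope R_scope.

Lemma exp_pow' (k : nat) y : exp (INR k * y) = exp y ^ k.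
Proof.
elim: k => [|k IH]; first by rewrite /= Rmult_0_l exp_0.
by rewrite S_INR Rmult_plus_distr_r Rmult_1_l exp_plus IH /=; ring.
Qed.

Lemma ln_le'' a b : 0 < a -> a <= b -> ln a <= ln b.
Proof. move=> h0 h; case: (Rle_lt_or_eq_dec _ _ h) => [h'|->]; [left; exact: ln_increasing | lra]. Qed.

Lemma exp_le'' a b : a <= b -> exp a <= exp b.
Proof. move=> h; case: (Rle_lt_or_eq_dec _ _ h) => [h'|->]; [left; exact: exp_increasing | lra]. Qed.

Lemma Rdiv_le_0_compat a b : 0 <= a -> 0 < b -> 0 <= a / b.
Proof. move=> h1 h2; apply: Rmult_le_pos => //; left; exact: Rinv_0_lt_compat. Qed.

Lemma final_real (S Tt L a d c K eps : R) (k : nat) :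
  3 <= S -> L = ln S -> 4 < a -> 0 < d -> c = 6 / ln (1 + d / 2) -> K = INR k ->
  c * L < K -> K <= c * L + 1 -> 6 * (c + 1) ^ 2 + 1 <= L -> 2 * (c + 1) / d <= S ->
  0 < eps -> 9 / eps + 1 <= S ->
  S * Rpower L (2 * a) <= Tt -> Tt <= 2 * S ^ 2 ->
  let ps := (S * ln Tt - a * S * ln (ln S)) / Tt in
  (0 <= ps <= 1) /\ K < (1 + d) * S * Rpower L a /\
  (Tt + 1) * S * ((Tt * S) ^ k * exp (- (ps / S * (K * Tt - K * (K - 1) * (S + 1)))))
    / ((1 + d) * S * Rpower L a - K) ^ k < eps.
Proof.
move=> HS3 HL Ha Hd Hc HK HK1 HK2 HL0 HS1 He HSe HT1 HT2 ps.
have hln : 0 < ln (1 + d / 2) by rewrite -ln_1; apply: ln_increasing; lra.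
have hc : 0 < c by rewrite Hc; apply: Rdiv_lt_0_compat; lra.
have hL1 : 1 <= L by nra.
have hS0 : 0 < S by lra.
have hLp : 0 < L by lra.
have hRa : L <= Rpower L a by rewrite -{1}(Rpower_1 L hLp); apply: Rle_Rpower; lra.
have hR8 : L ^ 8 <= Rpower L (2 * a).
  by rewrite -(Rpower_pow 8 L hLp); apply: Rle_Rpower => //; rewrite /INR /=; lra.
have hL8 : 1 <= L ^ 8 by have := pow_R1_Rle L 8 hL1; lra.
have hTp : 0 < Tt by nra.
have hlnTt : ln Tt <= 3 * L.
  have -> : 3 * L = INR 3 * ln S by rewrite HL /INR; ring.
  rewrite -(ln_pow S hS0 3); apply: ln_le''=> //; nra.
have hlnL : 0 <= ln L by rewrite -ln_1; apply: ln_le''; lra.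
have hlnTa : a * ln L <= ln Tt.
  have -> : a * ln L = ln (Rpower L a) by rewrite /Rpower ln_exp.
  apply: ln_le''; first by apply: exp_pos.
  have : Rpower L a <= Rpower L (2 * a) by apply: Rle_Rpower; lra.
  have : 0 <= Rpower L (2 * a) by left; apply: exp_pos.
  nra.
have hpsT : ps * Tt = S * (ln Tt - a * ln L) by rewrite /ps HL; field; lra.
have hps0 : 0 <= ps.
  have : 0 <= ps * Tt by rewrite hpsT; apply: Rmult_le_pos; lra.
  move=> h; apply: (Rmult_le_reg_r Tt) => //; lra.
have hpsL : ps * L ^ 7 <= 3.
  have h1 : ps * (S * L ^ 8) <= ps * Tt by apply: Rmult_le_compat_l => //; nra.
  have h2 : ps * Tt <= 3 * S * L.
    rewrite hpsT; have h0 : 0 <= a * ln L by apply: Rmult_le_pos; lra.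
    have h : ln Tt - a * ln L <= 3 * L by lra.
    have := Rmult_le_compat_l S _ _ (Rlt_le _ _ hS0) h; lra.
  have h3 : ps * (S * L ^ 8) = (ps * L ^ 7) * (S * L) by ring.
  have h4 : 0 < S * L by nra.
  apply: (Rmult_le_reg_r (S * L)) => //.
  have h5 : 3 * S * L = 3 * (S * L) by ring.
  rewrite h3 in h1; rewrite h5 in h2; lra.
have hL7 : L <= L ^ 7 by have := Rle_pow L 1 7 hL1; rewrite pow_1; apply; apply/leP.
have hL5 : L <= L ^ 5 by have := Rle_pow L 1 5 hL1; rewrite pow_1; apply; apply/leP.
have hps1 : ps <= 1 by nra.
set mu := S * Rpower L a.
have hmu : S * L <= mu by rewrite /mu; apply: Rmult_le_compat_l; lra.
have hmu0 : 0 < mu by nra.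
have hK0 : 0 <= K by nra.
have hK3 : K <= (c + 1) * L by nra.
have hSd : 2 * (c + 1) <= S * d.
  have := Rmult_le_compat_r d _ _ (Rlt_le _ _ Hd) HS1.
  have -> : 2 * (c + 1) / d * d = 2 * (c + 1) by field; lra.
  lra.
have hK4 : K <= d / 2 * mu.
  have : (c + 1) * L <= d / 2 * (S * L) by nra.
  have : d / 2 * (S * L) <= d / 2 * mu by apply: Rmult_le_compat_l; lra.
  lra.
have hT : (1 + d) * S * Rpower L a = (1 + d) * mu by rewrite /mu; ring.
rewrite hT.
split; first by split => //; nra.
have hTK : (1 + d / 2) * mu <= (1 + d) * mu - K by lra.
set E0 := ps / S * (K * (K - 1) * (S + 1)).
have hE0 : E0 <= 1.
  have hA : ps * ((c + 1) ^ 2 * L ^ 2) <= / 2.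
    have h1 : ps * ((c + 1) ^ 2 * L ^ 2) * L ^ 5 <= 3 * (c + 1) ^ 2.
      have -> : ps * ((c + 1) ^ 2 * L ^ 2) * L ^ 5 = (c + 1) ^ 2 * (ps * L ^ 7) by ring.
      have : 0 <= (c + 1) ^ 2 by apply: pow2_ge_0.
      nra.
    have h2 : 0 <= ps * ((c + 1) ^ 2 * L ^ 2).
      apply: Rmult_le_pos => //; apply: Rmult_le_pos; apply: pow_le; lra.
    have h3 : 6 * (c + 1) ^ 2 <= L ^ 5 by lra.
    have h4 : 0 < (c + 1) ^ 2 by apply: pow_lt; lra.
    nra.
  have hK5 : K * K <= (c + 1) ^ 2 * L ^ 2.
    have -> : (c + 1) ^ 2 * L ^ 2 = ((c + 1) * L) * ((c + 1) * L) by ring.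
    apply: Rmult_le_compat; lra.
  have hq : ps / S * (S + 1) <= 2 * ps.
    have -> : ps / S * (S + 1) = ps + ps / S by field; lra.
    have : ps / S <= ps.
      rewrite /Rdiv; have : / S <= 1 by apply: (Rmult_le_reg_l S) => //; rewrite Rinv_r; lra.
      nra.
    lra.
  have hq0 : 0 <= ps / S * (S + 1).
    apply: Rmult_le_pos; last lra; apply: Rdiv_le_0_compat; lra.
  have -> : E0 = (ps / S * (S + 1)) * (K * (K - 1)) by rewrite /E0; ring.
  have g1 : K * (K - 1) <= K * K by nra.
  have g2 : ps / S * (S + 1) * (K * (K - 1)) <= ps / S * (S + 1) * (K * K) by apply: Rmult_le_compat_l.
  have g3 : ps / S * (S + 1) * (K * K) <= 2 * ps * (K * K) by apply: Rmult_le_compat_r; nra.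
  have g4 : ps * (K * K) <= ps * ((c + 1) ^ 2 * L ^ 2) by apply: Rmult_le_compat_l.
  lra.
have hy : exp (- (ps / S * Tt)) = Rpower L a / Tt.
  have -> : ps / S * Tt = ln Tt - a * ln L.
    have -> : ps / S * Tt = (ps * Tt) / S by field; lra.
    by rewrite hpsT; field; lra.
  rewrite /Rpower Rmult_comm.
  have -> : - (ln Tt - ln L * a) = ln L * a + - ln Tt by ring.
  by rewrite exp_plus exp_Ropp exp_ln.
have hexp : exp (- (ps / S * (K * Tt - K * (K - 1) * (S + 1)))) = (Rpower L a / Tt) ^ k * exp E0.
  have -> : - (ps / S * (K * Tt - K * (K - 1) * (S + 1))) = K * (- (ps / S * Tt)) + E0 by rewrite /E0; ring.
  by rewrite exp_plus HK exp_pow' hy.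
rewrite hexp.
have hmain : (Tt * S) ^ k * ((Rpower L a / Tt) ^ k * exp E0) = mu ^ k * exp E0.
  rewrite -Rmult_assoc -Rpow_mult_distr; congr (_ ^ _ * _); rewrite /mu; field; lra.
rewrite hmain.
have hratio : mu ^ k / ((1 + d) * mu - K) ^ k <= / S ^ 6.
  have hTK0 : 0 < (1 + d) * mu - K by nra.
  rewrite /Rdiv -pow_inv -Rpow_mult_distr.
  have h1 : mu * / ((1 + d) * mu - K) <= / (1 + d / 2).
    set X := (1 + d) * mu - K.
    apply: (Rmult_le_reg_r (1 + d / 2)); first lra.
    rewrite Rinv_l; last lra.
    have -> : mu * / X * (1 + d / 2) = (mu * (1 + d / 2)) * / X by ring.
    have hXi : 0 < / X by apply: Rinv_0_lt_compat.
    have : mu * (1 + d / 2) * / X <= X * / X by apply: Rmult_le_compat_r; [left; exact: hXi | rewrite /X; lra].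
    rewrite Rinv_r; [lra | rewrite /X; lra].
  have h2 : 0 <= mu * / ((1 + d) * mu - K).
    apply: Rmult_le_pos; [lra | left; apply: Rinv_0_lt_compat; lra].
  apply: Rle_trans (pow_incr _ _ k (conj h2 h1)) _.
  have -> : / (1 + d / 2) = exp (- ln (1 + d / 2)) by rewrite exp_Ropp exp_ln; lra.
  rewrite -exp_pow' -HK.
  have -> : / S ^ 6 = exp (INR 6 * - L) by rewrite exp_pow' exp_Ropp HL exp_ln // pow_inv.
  apply: exp_le''.
  have : c * ln (1 + d / 2) = 6 by rewrite Hc; field; lra.
  rewrite /INR /=.
  nra.
have hE1 : exp E0 <= 3 by apply: Rle_trans (exp_le'' hE0) exp_le_3.
have hE2 : 0 < exp E0 by apply: exp_pos.
have hS3' : (Tt + 1) * S <= 3 * S ^ 3 by nra.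
have hpowk : 0 < mu ^ k by apply: pow_lt.
have hden : 0 < ((1 + d) * mu - K) ^ k by apply: pow_lt; nra.
have -> : (Tt + 1) * S * (mu ^ k * exp E0) / ((1 + d) * mu - K) ^ k =
          ((Tt + 1) * S) * exp E0 * (mu ^ k / ((1 + d) * mu - K) ^ k) by field; lra.
have h9 : (Tt + 1) * S * exp E0 <= 9 * S ^ 3.
  have : 0 <= (Tt + 1) * S by nra.
  nra.
have hr0 : 0 <= mu ^ k / ((1 + d) * mu - K) ^ k by apply: Rdiv_le_0_compat; lra.
split; first nra.
apply: (@Rle_lt_trans _ (9 * S ^ 3 * / S ^ 6)).
  apply: Rmult_le_compat; [| exact: hr0 | exact: h9 | exact: hratio]; apply: Rmult_le_pos; [nra | lra].
have -> : 9 * S ^ 3 * / S ^ 6 = 9 / S ^ 3 by field; lra.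
have hS3 : S <= S ^ 3 by nra.
apply: (@Rle_lt_trans _ (9 / S)).
  apply: Rmult_le_compat_l; first lra; apply: Rinv_le_contravar; lra.
apply: (Rmult_lt_reg_r S) => //; rewrite /Rdiv Rmult_assoc Rinv_l; last lra.
have : 9 / eps * eps = 9 by field; lra.
nra.
Qed.

Local Open Scope R_scope.

Lemma INR_up_pos (r : R) : (0 < r) -> INR (Z.to_nat (up r)) = IZR (up r).
Proof.
move=> hr; have [h1 _] := archimed r.
rewrite INR_IZR_INZ Znat.Z2Nat.id //; apply: le_IZR; lra.
Qed.

Theorem mainTheorem4 (alpha delta : R) (Halpha : Rlt 4 alpha) (Hdelta : Rlt 0 delta) :
  forall eps : R, Rlt 0 eps ->
  exists s0 : nat,
    forall (P L : finType) (I : P -> L -> bool) (s t : nat),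
      is_GQ I s t -> locally_sparse I s -> (s0 <= s)%N ->
      Rle (Rmult (INR s) (Rpower (ln (INR s)) (Rmult 2 alpha))) (INR t) ->
      forall x : P, Rlt (probB I s t alpha delta x) eps.
Proof.
move=> eps He.
set c := (6 / ln (1 + delta / 2)).
have hln : (0 < ln (1 + delta / 2)) by rewrite -ln_1; apply: ln_increasing; lra.
have hc : (0 < c) by apply: Rdiv_lt_0_compat; lra.
set L0 := (6 * (c + 1) ^ 2 + 1).
set B := (exp L0 + 2 * (c + 1) / delta + 9 / eps + 3).
have hB1 : (0 <= 2 * (c + 1) / delta) by apply: Rdiv_le_0_compat; lra.
have hB2 : (0 <= 9 / eps) by apply: Rdiv_le_0_compat; lra.
have hB3 : (0 < exp L0) by apply: exp_pos.
exists (Z.to_nat (up B)) => P L I s t HG HLS Hs0 HT x.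
set S := INR s.
have hS : (B < S).
  have := INR_leq Hs0; rewrite INR_up_pos; last by rewrite /B; lra.
  have [h1 _] := archimed B; rewrite /S; lra.
rewrite /B in hS.
have hS3 : (3 <= S) by lra.
have hS0 : (0 < S) by lra.
have hL0 : (L0 <= ln S) by rewrite -(ln_exp L0); apply: ln_le''; lra.
have hcL : (0 < c * ln S) by apply: Rmult_lt_0_compat => //; rewrite /L0 in hL0; have := pow2_ge_0 (c + 1); lra.
set k := Z.to_nat (up (c * ln S)).
have hK : INR k = IZR (up (c * ln S)) by rewrite /k INR_up_pos.
have [hK1 hK2] := archimed (c * ln S).
have htb := t_bound HG HLS x.
have hTt : (INR t <= 2 * S ^ 2).
  have h2 : INR 2 = 2 by simpl; lra.
  have := INR_leq htb; rewrite INR_muln INR_expn h2 /S => h; lra.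
have := @final_real S (INR t) (ln S) alpha delta c (INR k) eps k hS3 erefl Halpha Hdelta erefl erefl.
move=> /(_ _ _ _ _ He _ HT hTt).
case.
- by rewrite hK.
- rewrite hK; lra.
- exact: hL0.
- lra.
- lra.
move=> Hps [HKT Hfin].
have hk1 : (1 <= k)%N.
  have : (0 < INR k) by rewrite hK; lra.
  by case: (k) => [|k'] /=; [lra | ].
apply: Rle_lt_trans (probB_bound x HG Hps HLS HKT) _.
have e1 : INR (t.+1 * s) = (INR t + 1) * S by rewrite INR_muln S_INR.
have e2 : INR (t * s) = INR t * S by rewrite INR_muln.
have e3 : INR (k * t) = INR k * INR t by rewrite INR_muln.
have e4 : INR (k * (k - 1) * s.+1) = INR k * (INR k - 1) * (S + 1).
  have h1 : INR 1 = 1 by reflexivity.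
  rewrite !INR_muln (INR_subn hk1) (S_INR s) /S; rewrite [INR 1]/=; ring.
rewrite e1 e2 e3 e4; exact: Hfin.
Qed.
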